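(* Let $R$ be an ordered ring with unit. Fix either a finite size $n$ or the infinite index set $\{1,2,3,\dots\}$. The set of all upper triangular matrices (of that size) with entries in $R$ whose diagonal entries are all positive and invertible in $R$ forms a group under matrix multiplication, and this group is orderable, i.e. it admits a relation $>$ such that for all $X,Y,Z$ exactly one of $X>Y$, $Y>X$, $X=Y$ holds, $>$ is transitive, and $X>Y$ implies $AXB>AYB$ for all $A,B$ in the group.
   Context: An ordered ring is a ring $R$ with a relation $>$ such that the additive group is totally ordered by $>$ with $x>y \Rightarrow a+x+b>a+y+b$, and such that $a>0$ and $x>y$ imply $ax>ay$ and $xa>ya$. An upper triangular (possibly infinite) matrix is one with all entries below the main diagonal equal to $0$; for infinite matrices indexed by positive integers, products are defined entrywise by the (finite) sums $\sum_{i\le j\le k} x_{ij}y_{jk}$. *)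

(* Defs.v *)
From mathcomp Require Import all_boot all_order all_algebra.
Set Implicit Arguments. Unset Strict Implicit. Unset Printing Implicit Defensive.
Import GRing.Theory.
Local Open Scope ring_scope.

Definition ordered_ring (R : nzRingType) (gt : R -> R -> Prop) : Prop :=
  (forall x : R, ~ gt x x) /\
  (forall x y z : R, gt x y -> gt y z -> gt x z) /\
  (forall x y : R, x <> y -> gt x y \/ gt y x) /\
  (forall a b x y : R, gt x y -> gt (a + x + b) (a + y + b)) /\
  (forall a x y : R, gt a 0 -> gt x y -> gt (a * x) (a * y) /\ gt (x * a) (y * a)).

Definition invertible (R : nzRingType) (x : R) : Prop :=
  exists y : R, x * y = 1 /\ y * x = 1.

Definition UT_fin (R : nzRingType) (gt : R -> R -> Prop) (n : nat)
  (A : 'M[R]_n) : Prop :=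
  (forall i j : 'I_n, (j < i)%N -> A i j = 0) /\
  (forall i : 'I_n, gt (A i i) 0 /\ invertible (A i i)).

(* ---------- infinite index set {1,2,3,...} (encoded as nat, shifted by 1) *)
Definition imat (R : Type) := nat -> nat -> R.

Definition imul (R : nzRingType) (X Y : imat R) : imat R :=
  fun i k => \sum_(i <= j < k.+1) X i j * Y j k.

Definition ione (R : nzRingType) : imat R :=
  fun i j => if i == j then 1 else 0.

Definition UT_inf (R : nzRingType) (gt : R -> R -> Prop) (A : imat R) : Prop :=
  (forall i j : nat, (j < i)%N -> A i j = 0) /\
  (forall i : nat, gt (A i i) 0 /\ invertible (A i i)).

Definition is_group_in (T : Type) (G : T -> Prop) (mul : T -> T -> T) (e : T)
  : Prop :=
  G e /\
  (forall X Y, G X -> G Y -> G (mul X Y)) /\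
  (forall X Y Z, G X -> G Y -> G Z -> mul (mul X Y) Z = mul X (mul Y Z)) /\
  (forall X, G X -> mul e X = X /\ mul X e = X) /\
  (forall X, G X -> exists Y, G Y /\ mul X Y = e /\ mul Y X = e).

Definition orderable_in (T : Type) (G : T -> Prop) (mul : T -> T -> T) : Prop :=
  exists gtG : T -> T -> Prop,
    (forall X Y, G X -> G Y ->
       (gtG X Y \/ gtG Y X \/ X = Y) /\
       ~ (gtG X Y /\ gtG Y X) /\ ~ (gtG X Y /\ X = Y) /\ ~ (gtG Y X /\ X = Y)) /\
    (forall X Y Z, G X -> G Y -> G Z -> gtG X Y -> gtG Y Z -> gtG X Z) /\
    (forall A B X Y, G A -> G B -> G X -> G Y ->
       gtG X Y -> gtG (mul (mul A X) B) (mul (mul A Y) B)).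

(* Main.v *)
Require Import Defs.
From mathcomp Require Import all_boot all_order all_algebra zify.
From Stdlib Require Import Classical FunctionalExtensionality ClassicalEpsilon.
Set Implicit Arguments. Unset Strict Implicit. Unset Printing Implicit Defensive.
Import GRing.Theory.
Local Open Scope ring_scope.

Section S.
Variables (R : nzRingType) (gt : R -> R -> Prop) (hR : ordered_ring gt).

Lemma gt_irr x : ~ gt x x. Proof. by case: hR. Qed.
Lemma gt_tr x y z : gt x y -> gt y z -> gt x z.
Proof. by case: hR => _ [h _]; apply: h. Qed.
Lemma gt_tot x y : x <> y -> gt x y \/ gt y x.
Proof. by case: hR => _ [_ [h _]]; apply: h. Qed.
Lemma gt_add a b x y : gt x y -> gt (a + x + b) (a + y + b).
Proof. by case: hR => _ [_ [_ [h _]]]; apply: h. Qed.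
Lemma gt_mull a x y : gt a 0 -> gt x y -> gt (a * x) (a * y).
Proof. by case: hR => _ [_ [_ [_ h]]] ha hxy; case: (h a x y ha hxy). Qed.
Lemma gt_mulr a x y : gt a 0 -> gt x y -> gt (x * a) (y * a).
Proof. by case: hR => _ [_ [_ [_ h]]] ha hxy; case: (h a x y ha hxy). Qed.

Lemma gt10 : gt 1 0.
Proof.
have one0 : (1:R) <> 0 by apply/eqP; exact: oner_neq0.
case: (gt_tot one0) => // h.
have h1 : gt (-1) 0.
  by have := gt_add (-1) 0 h; rewrite !addr0 addNr.
have := gt_mull h1 h1; rewrite mulr0 mulrNN mulr1 => h2.
by case: (gt_irr (gt_tr h h2)).
Qed.

Lemma gt_pos_mul a b : gt a 0 -> gt b 0 -> gt (a * b) 0.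
Proof. by move=> ha hb; have := gt_mull ha hb; rewrite mulr0. Qed.

Lemma gt_inv_pos a y : gt a 0 -> a * y = 1 -> gt y 0.
Proof.
move=> ha hy; have hy0 : y <> 0 by move=> e; move: hy; rewrite e mulr0 => /esym/eqP; rewrite oner_eq0.
case: (gt_tot hy0) => // h.
have := gt_mull ha h; rewrite mulr0 hy => h2.
by case: (gt_irr (gt_tr h2 gt10)).
Qed.

Lemma inv_mul (a b : R) : invertible a -> invertible b -> invertible (a * b).
Proof.
case=> a' [h1 h2] [b' [h3 h4]]; exists (b' * a'); split.
  by rewrite mulrA -(mulrA a) h3 mulr1.
by rewrite mulrA -(mulrA b') h2 mulr1.
Qed.

Definition before (d' i' d i : nat) := (d' < d)%N \/ (d' = d /\ (i' < i)%N).
Definition gtL (X Y : imat R) := exists d i,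
  (forall d' i', before d' i' d i -> X i' (i' + d')%N = Y i' (i' + d')%N) /\
  gt (X i (i + d)%N) (Y i (i + d)%N).

Lemma gtL_irr X : ~ gtL X X.
Proof. by case=> d [i [_ h]]; apply: (gt_irr h). Qed.

Lemma gtL_tr X Y Z : gtL X Y -> gtL Y Z -> gtL X Z.
Proof.
case=> d1 [i1 [e1 g1]] [d2 [i2 [e2 g2]]].
have [lt|ge] := boolP ((d1 < d2) || ((d1 == d2) && (i1 < i2)))%N.
  exists d1, i1; split.
    move=> d' i' hb; rewrite e1 // e2 //; rewrite /before in hb *; lia.
  by rewrite -(e2 d1 i1) //; rewrite /before; lia.
have [eq|ne] := boolP ((d1 == d2) && (i1 == i2)).
  case/andP: eq => /eqP ed /eqP ei; subst.
  exists d2, i2; split; last exact: gt_tr g1 g2.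
  by move=> d' i' hb; rewrite e1 // e2.
exists d2, i2; split.
  move=> d' i' hb; rewrite e1 ?e2 //; rewrite /before in hb *; lia.
by rewrite e1 //; rewrite /before; lia.
Qed.

Lemma ex_min (P : nat -> Prop) : (exists n, P n) -> exists n, P n /\ forall m, (m < n)%N -> ~ P m.
Proof.
case=> n Pn; elim: n {-2}n (leqnn n) Pn => [|N IH] n hn Pn.
  by exists n; split => // m hm; lia.
case: (classic (exists m, (m < n)%N /\ P m)) => [[m [hm Pm]]|no].
  by apply: (IH m) => //; lia.
by exists n; split => // m hm Pm; apply: no; exists m.
Qed.

Definition LZ (X : imat R) := forall i j, (j < i)%N -> X i j = 0.

Lemma gtL_tot X Y : LZ X -> LZ Y -> X <> Y -> gtL X Y \/ gtL Y X.
Proof.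
move=> lx ly ne.
have [p [q hpq]] : exists p q, X p q <> Y p q.
  apply: NNPP => h; apply: ne; apply: functional_extensionality => p.
  apply: functional_extensionality => q; apply: NNPP => h'; apply: h; by exists p, q.
have hle : (p <= q)%N.
  by case: (leqP p q) => // lt; case: hpq; rewrite lx // ly.
have ex0 : exists d, exists i, X i (i + d)%N <> Y i (i + d)%N.
  by exists (q - p)%N, p; rewrite subnKC.
have [d [[i hi] md]] := ex_min ex0.
have [i' [hi' mi]] := ex_min (P := fun i => X i (i + d)%N <> Y i (i + d)%N) (ex_intro _ i hi).
have E : forall d'' i'', before d'' i'' d i' -> X i'' (i'' + d'')%N = Y i'' (i'' + d'')%N.
  move=> d'' i'' [h|[-> h]]; apply: NNPP => h'.
    by apply: (md d'' h); exists i''.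
  by apply: (mi i'' h).
case: (gt_tot hi') => g; [left|right]; exists d, i'; split => //.
by move=> d'' i'' hb; rewrite E.
Qed.


Implicit Types (X Y Z A B : imat R).

Lemma imul_LZ X Y : LZ (imul X Y).
Proof. by move=> i k h; rewrite /imul big_geq. Qed.

Lemma imul_diag X Y i : imul X Y i i = X i i * Y i i.
Proof. by rewrite /imul big_nat1. Qed.

Lemma imul_full X Y N i k : LZ X -> LZ Y -> (k < N)%N ->
  imul X Y i k = \sum_(0 <= j < N) X i j * Y j k.
Proof.
move=> lx ly hk; rewrite /imul.
case: (leqP i k) => hik.
  rewrite (big_cat_nat _ (m := 0) (n := i) (p := N)) /=; [|lia|lia].
  rewrite (big_cat_nat _ (m := i) (n := k.+1) (p := N)) /=; [|lia|lia].
  have -> : \sum_(0 <= j < i) X i j * Y j k = 0.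
    by rewrite big1_seq // => j /andP [_]; rewrite mem_index_iota => /andP [_ h]; rewrite lx // mul0r.
  have -> : \sum_(k.+1 <= j < N) X i j * Y j k = 0.
    by rewrite big1_seq // => j /andP [_]; rewrite mem_index_iota => /andP [h _]; rewrite ly // mulr0.
  by rewrite add0r addr0.
rewrite big_geq // big1_seq // => j /andP [_ _].
by case: (ltnP j i) => h; [rewrite lx // mul0r | rewrite ly ?mulr0 //; lia].
Qed.

Lemma gtL_mull A X Y : gtL X Y ->
  (forall d i, gt (X i (i + d)%N) (Y i (i + d)%N) -> gt (A i i) 0) ->
  gtL (imul A X) (imul A Y).
Proof.
case=> d [i [e g]] hA; exists d, i; split.
  move=> d' i' hb; rewrite /imul; apply: eq_big_nat => j hj.
  have -> : (i' + d' = j + (i' + d' - j))%N by lia.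
  rewrite e //; rewrite /before in hb *; lia.
rewrite /imul big_ltn; last by lia.
rewrite [X in gt _ X]big_ltn; last by lia.
have -> : \sum_(i.+1 <= j < (i + d).+1) A i j * X j (i + d)%N =
          \sum_(i.+1 <= j < (i + d).+1) A i j * Y j (i + d)%N.
  apply: eq_big_nat => j hj.
  have -> : (i + d = j + (i + d - j))%N by lia.
  rewrite e //; rewrite /before; lia.
have h := gt_add 0 (\sum_(i.+1 <= j < (i + d).+1) A i j * Y j (i + d)%N) (gt_mull (hA d i g) g).
by rewrite !add0r in h.
Qed.

Lemma gtL_mulr B X Y : gtL X Y ->
  (forall d i, gt (X i (i + d)%N) (Y i (i + d)%N) -> gt (B (i + d)%N (i + d)%N) 0) ->
  gtL (imul X B) (imul Y B).
Proof.
case=> d [i [e g]] hB; exists d, i; split.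
  move=> d' i' hb; rewrite /imul; apply: eq_big_nat => j hj.
  have -> : j = (i' + (j - i'))%N by lia.
  rewrite e //; rewrite /before in hb *; lia.
rewrite /imul big_nat_recr /=; last by lia.
rewrite [X in gt _ X]big_nat_recr /=; last by lia.
have -> : \sum_(i <= j < i + d) X i j * B j (i + d)%N =
          \sum_(i <= j < i + d) Y i j * B j (i + d)%N.
  apply: eq_big_nat => j hj.
  have -> : j = (i + (j - i))%N by lia.
  rewrite e //; rewrite /before; lia.
have h := gt_add (\sum_(i <= j < i + d) Y i j * B j (i + d)%N) 0 (gt_mulr (hB d i g) g).
by rewrite !addr0 in h.
Qed.

Lemma imul1 X : LZ X -> imul (@ione R) X = X.
Proof.
move=> lx; apply: functional_extensionality => i; apply: functional_extensionality => k.
rewrite /imul /ione; case: (leqP i k) => h.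
  rewrite big_ltn // eqxx mul1r big1_seq ?addr0 // => j /andP [_].
  by rewrite mem_index_iota => /andP [hj _]; rewrite (_ : (i == j) = false) ?mul0r //; lia.
by rewrite big_geq // lx.
Qed.

Lemma imulr1 X : LZ X -> imul X (@ione R) = X.
Proof.
move=> lx; apply: functional_extensionality => i; apply: functional_extensionality => k.
rewrite /imul /ione; case: (leqP i k) => h.
  rewrite big_nat_recr //= eqxx mulr1 big1_seq ?add0r // => j /andP [_].
  by rewrite mem_index_iota => /andP [_ hj]; rewrite (_ : (j == k) = false) ?mulr0 //; lia.
by rewrite big_geq // lx.
Qed.

Lemma imulA X Y Z : LZ X -> LZ Y -> LZ Z ->
  imul (imul X Y) Z = imul X (imul Y Z).
Proof.
move=> lx ly lz; apply: functional_extensionality => i; apply: functional_extensionality => l.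
rewrite (imul_full _ _ (N := l.+1)) //; last exact: imul_LZ.
rewrite (imul_full (N := l.+1)) //; last exact: imul_LZ.
transitivity (\sum_(0 <= j < l.+1) \sum_(0 <= m < l.+1) X i m * (Y m j * Z j l)).
  apply: eq_big_nat => j hj; rewrite (imul_full (N := l.+1)) //. 
  by rewrite mulr_suml; apply: eq_bigr => m _; rewrite mulrA.
rewrite exchange_big /=; apply: eq_big_nat => m hm.
by rewrite (imul_full (N := l.+1)) // mulr_sumr.
Qed.

Definition diaginv (X : imat R) := forall i, invertible (X i i).

Lemma column X k : LZ X -> diaginv X ->
  exists c : nat -> R, (forall j, (k < j)%N -> c j = 0) /\
    (forall i, (i <= k)%N -> \sum_(i <= j < k.+1) X i j * c j = (i == k)%:R).
Proof.
move=> lx dx.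
suff H : forall m, (m <= k)%N -> exists c : nat -> R, (forall j, (k < j)%N -> c j = 0) /\
    (forall i, (k - m <= i <= k)%N -> \sum_(i <= j < k.+1) X i j * c j = (i == k)%:R).
  have [c [h1 h2]] := H k (leqnn k); exists c; split => // i hi; apply: h2; lia.
elim=> [|m IH] hm.
  have [y [hy1 hy2]] := dx k.
  exists (fun j => if j == k then y else 0); split.
    by move=> j hj; have -> : (j == k) = false by lia.
  move=> i hi; have -> : i = k by lia.
  by rewrite big_nat1 eqxx.
have [c [h1 h2]] := IH (ltnW hm).
set i0 := (k - m.+1)%N.
have [y [hy1 hy2]] := dx i0.
pose S := \sum_(i0.+1 <= j < k.+1) X i0 j * c j.
exists (fun j => if j == i0 then y * ((i0 == k)%:R - S) else c j); split.
  by move=> j hj; rewrite h1 //; case: ifP => // /eqP e; lia.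
move=> i hi; case: (ltnP i0 i) => hi0.
  rewrite -h2; last by lia.
  apply: eq_big_nat => j hj; have -> : (j == i0) = false by lia.
  done.
have -> : i = i0 by lia.
rewrite big_ltn; last by lia.
rewrite eqxx mulrA hy1 mul1r.
have -> : \sum_(i0.+1 <= j < k.+1) X i0 j * (if j == i0 then y * ((i0 == k)%:R - S) else c j) = S.
  by apply: eq_big_nat => j hj; have -> : (j == i0) = false by lia.
by rewrite subrK.
Qed.

Definition UTi (X : imat R) := LZ X /\ forall i, gt (X i i) 0 /\ invertible (X i i).

Lemma rinv_inf X : UTi X -> exists Y, UTi Y /\ imul X Y = @ione R.
Proof.
move=> [lx dx].
have dx' : diaginv X by move=> i; case: (dx i).
have H := fun k => column k lx dx'.
have [C hC] : exists C : nat -> nat -> R, forall k, (forall j, (k < j)%N -> C k j = 0) /\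
    (forall i, (i <= k)%N -> \sum_(i <= j < k.+1) X i j * C k j = (i == k)%:R).
  exists (fun k => proj1_sig (constructive_indefinite_description _ (H k))).
  by move=> k; exact: (proj2_sig (constructive_indefinite_description _ (H k))).
have diagC : forall k, X k k * C k k = 1.
  by move=> k; have := (proj2 (hC k)) k (leqnn k); rewrite big_nat1 eqxx.
exists (fun j k => C k j); split; first split.
- by move=> i j hij; apply: (proj1 (hC j)).
- move=> i; have [y [hy1 hy2]] := proj2 (dx i).
  have e : C i i = y by rewrite -[C i i]mul1r -hy2 -mulrA diagC mulr1.
  rewrite e; split; first exact: (gt_inv_pos (proj1 (dx i)) hy1).
  by exists (X i i).
apply: functional_extensionality => i; apply: functional_extensionality => k.
rewrite /imul /ione; case: (leqP i k) => h.
  by rewrite (proj2 (hC k)) //; case: (i == k).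
by rewrite big_geq //; have -> : (i == k) = false by lia.
Qed.


Section Fin.
Variable n : nat.

Definition ext (A : 'M[R]_n) : imat R := fun i j =>
  match (insub i : option 'I_n), (insub j : option 'I_n) with
  | Some i', Some j' => A i' j' | _, _ => 0 end.
Definition ext1 (A : 'M[R]_n) : imat R := fun i j =>
  match (insub i : option 'I_n), (insub j : option 'I_n) with
  | Some i', Some j' => A i' j' | _, _ => @ione R i j end.

Lemma ext_val (A : 'M[R]_n) (i j : 'I_n) : ext A i j = A i j.
Proof. by rewrite /ext !valK. Qed.
Lemma ext1_val (A : 'M[R]_n) (i j : 'I_n) : ext1 A i j = A i j.
Proof. by rewrite /ext1 !valK. Qed.

Lemma ext_out (A : 'M[R]_n) i j : ~~ ((i < n) && (j < n))%N -> ext A i j = 0.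
Proof.
rewrite negb_and => /orP [h|h]; rewrite /ext.
  by rewrite insubN.
by case: (insub i) => // ?; rewrite insubN.
Qed.

Lemma ext_LZ (A : 'M[R]_n) : UT_fin gt A -> LZ (ext A).
Proof.
move=> [lz _] i j h; rewrite /ext.
case: insubP => [i' _ ei|_] //; case: insubP => [j' _ ej|_] //.
by apply: lz; rewrite ei ej.
Qed.

Lemma ext1_UTi (A : 'M[R]_n) : UT_fin gt A -> UTi (ext1 A).
Proof.
move=> [lz dg]; split.
  move=> i j h; rewrite /ext1.
  have io : @ione R i j = 0 by rewrite /ione (_ : (i == j) = false) //; lia.
  case: insubP => [i' _ ei|_] //; case: insubP => [j' _ ej|_] //.
  by apply: lz; rewrite ei ej.
move=> i; rewrite /ext1; case: insubP => [i' _ ei|_].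
  exact: dg i'.
rewrite /ione eqxx; split; first exact: gt10.
by exists 1; rewrite mulr1.
Qed.

Lemma ext_mul (A B : 'M[R]_n) : UT_fin gt A -> UT_fin gt B -> ext (A *m B) = imul (ext A) (ext B).
Proof.
move=> uA uB; apply: functional_extensionality => i; apply: functional_extensionality => k.
have [hin|hout] := boolP ((i < n) && (k < n))%N.
  case/andP: hin => hi hk.
  rewrite -[i]/(nat_of_ord (Ordinal hi)) -[k]/(nat_of_ord (Ordinal hk)) ext_val mxE.
  rewrite (imul_full i (ext_LZ uA) (ext_LZ uB) hk) big_mkord.
  by apply: eq_bigr => j _; rewrite -(ext_val A (Ordinal hi) j) -(ext_val B j (Ordinal hk)).
rewrite ext_out // /imul big1_seq // => j _.
move: hout; rewrite negb_and => /orP [h|h].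
  by rewrite ext_out ?mul0r // negb_and h.
by rewrite [ext B _ _]ext_out ?mulr0 // negb_and h orbT.
Qed.

Lemma ext_inj (A B : 'M[R]_n) : ext A = ext B -> A = B.
Proof. by move=> e; apply/matrixP => i j; rewrite -!ext_val e. Qed.

Lemma ext_in (A B : 'M[R]_n) i j : gt (ext A i j) (ext B i j) -> ((i < n) && (j < n))%N.
Proof.
by apply: contraPT => h; rewrite !ext_out //; apply: gt_irr.
Qed.

Lemma ext_diag_pos (A : 'M[R]_n) i : UT_fin gt A -> (i < n)%N -> gt (ext A i i) 0.
Proof.
move=> [_ dg] hi; rewrite -[i]/(nat_of_ord (Ordinal hi)) ext_val.
exact: (proj1 (dg _)).
Qed.

Lemma UTf_mul (A B : 'M[R]_n) : UT_fin gt A -> UT_fin gt B -> UT_fin gt (A *m B).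
Proof.
move=> uA uB; split.
  by move=> i j h; rewrite -ext_val ext_mul // imul_LZ.
move=> i; rewrite -ext_val ext_mul // imul_diag !ext_val.
case: uA => _ /(_ i) [p1 i1]; case: uB => _ /(_ i) [p2 i2].
by split; [apply: gt_pos_mul | apply: inv_mul].
Qed.

Lemma UTf_1 : UT_fin gt (1%:M : 'M[R]_n).
Proof.
split.
  by move=> i j h; rewrite mxE (_ : (i == j) = false) //; apply/negbTE; rewrite neq_ltn h orbT.
move=> i; rewrite mxE eqxx /=; split; first exact: gt10.
by exists 1; rewrite mulr1.
Qed.

Lemma rinv_fin (A : 'M[R]_n) : UT_fin gt A -> exists B : 'M[R]_n, UT_fin gt B /\ A *m B = 1%:M.
Proof.
move=> uA; have [Y [[lY dY] eY]] := rinv_inf (ext1_UTi uA).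
exists (\matrix_(i, j) Y i j); split; first split.
- by move=> i j h; rewrite mxE lY.
- by move=> i; rewrite mxE; apply: dY.
apply/matrixP => i k; rewrite !mxE.
transitivity (imul (ext1 A) Y i k).
  rewrite (imul_full (N := n)) //; first last.
  - by case: (ext1_UTi uA).
  rewrite big_mkord; apply: eq_bigr => j _; by rewrite mxE ext1_val.
rewrite eY /ione.
by case: eqP => [/val_inj -> | ne]; [rewrite eqxx | case: eqP => // e; case: ne; rewrite e].
Qed.

End Fin.

End S.

Theorem lemma2 (R : nzRingType) (gt : R -> R -> Prop) (hR : ordered_ring gt) :
  (forall n : nat,
     is_group_in (UT_fin gt (n := n)) (@mulmx R n n n) 1%:M /\
     orderable_in (UT_fin gt (n := n)) (@mulmx R n n n)) /\
  (is_group_in (UT_inf gt) (@imul R) (@ione R) /\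
   orderable_in (UT_inf gt) (@imul R)).
Proof.
split.
  move=> n; split.
    split; first exact: UTf_1.
    split; first by move=> X Y; apply: UTf_mul.
    split; first by move=> X Y Z _ _ _; rewrite mulmxA.
    split; first by move=> X _; rewrite mul1mx mulmx1.
    move=> X uX; have [Y [uY eY]] := rinv_fin hR uX.
    have [Z [uZ eZ]] := rinv_fin hR uY.
    have XZ : X = Z by rewrite -[X]mulmx1 -eZ mulmxA eY mul1mx.
    by exists Y; split => //; split => //; rewrite XZ.
  exists (fun X Y => gtL gt (ext X) (ext Y)); split; last split.
  - move=> X Y uX uY; split; last split; last split.
    + case: (classic (X = Y)) => [->|ne]; first by right; right.
      have ne' : ext X <> ext Y by move=> e; apply: ne; apply: ext_inj e.
      by case: (gtL_tot hR (ext_LZ uX) (ext_LZ uY) ne') => h; [left|right; left].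
    + by case=> h1 h2; apply: (gtL_irr hR (gtL_tr hR h1 h2)).
    + by case=> h e; subst; apply: (gtL_irr hR h).
    + by case=> h e; subst; apply: (gtL_irr hR h).
  - by move=> X Y Z _ _ _; apply: gtL_tr.
  move=> A B X Y uA uB uX uY h.
  have h1 : gtL gt (ext (A *m X)) (ext (A *m Y)).
    rewrite (ext_mul uA uX) (ext_mul uA uY); apply: gtL_mull => // d i g.
    apply: (ext_diag_pos uA); have := ext_in hR g; lia.
  rewrite (ext_mul (UTf_mul hR uA uX) uB) (ext_mul (UTf_mul hR uA uY) uB).
  apply: gtL_mulr => // d i g.
  apply: (ext_diag_pos uB); have := ext_in hR g; lia.
split.
  split.
    split; first by move=> i j h; rewrite /ione (_ : (i == j) = false) //; lia.
    by move=> i; rewrite /ione eqxx; split; [exact: gt10 | exists 1; rewrite mulr1].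
  split.
    move=> X Y [lX dX] [lY dY]; split; first exact: imul_LZ.
    move=> i; rewrite imul_diag; case: (dX i) => p1 i1; case: (dY i) => p2 i2.
    by split; [apply: gt_pos_mul | apply: inv_mul].
  split; first by move=> X Y Z [? _] [? _] [? _]; apply: imulA.
  split; first by move=> X [lX _]; rewrite imul1 // imulr1.
  move=> X uX; have [Y [uY eY]] := rinv_inf hR uX.
  have [Z [uZ eZ]] := rinv_inf hR uY.
  have XZ : X = Z.
    by rewrite -[X](imulr1 (proj1 uX)) -eZ -imulA ?eY ?imul1 //; case: uX; case: uY; case: uZ.
  by exists Y; split => //; split => //; rewrite XZ.
exists (gtL gt); split; last split.
- move=> X Y [lX _] [lY _]; split; last split; last split.
  + case: (classic (X = Y)) => [->|ne]; first by right; right.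
    by case: (gtL_tot hR lX lY ne) => h; [left|right; left].
  + by case=> h1 h2; apply: (gtL_irr hR (gtL_tr hR h1 h2)).
  + by case=> h e; subst; apply: (gtL_irr hR h).
  + by case=> h e; subst; apply: (gtL_irr hR h).
- by move=> X Y Z _ _ _; apply: gtL_tr.
move=> A B X Y [_ dA] [_ dB] _ _ h.
apply: (gtL_mulr hR (gtL_mull hR h _)).
all: move=> d i _; first [by case: (dA i) | by case: (dB (i + d)%N)].
Qed.
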